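(* Let $\mathcal{H}$ be a complex Hilbert space. If $T\in\mathbb{B}(\mathcal{H})$ is normal, then $\Omega(T) = \sqrt{2}\|T\|$.
   Context: $\mathbb{B}(\mathcal{H})$ is the algebra of bounded linear operators on $\mathcal{H}$ and $\|\cdot\|$ the usual operator norm. Dragomir's norm is $\Omega(T)=\sup\{\|\zeta T+\eta T^*\|:\ \zeta,\eta\in\mathbb{C},\ |\zeta|^2+|\eta|^2\le 1\}$. *)

(* Defs.v *)
From HB Require Import structures.
From mathcomp Require Import all_boot all_order all_algebra.
From mathcomp Require Import complex.
From mathcomp Require Import boolp classical_sets reals.

Set Implicit Arguments.
Unset Strict Implicit.
Unset Printing Implicit Defensive.
Import Order.TTheory GRing.Theory Num.Theory.
Local Open Scope ring_scope.
Local Open Scope classical_set_scope.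

Section Hilbert.
Variables (R : realType) (V : lmodType R[i]) (inner : V -> V -> R[i]).

Definition is_inner_product : Prop :=
  [/\ (forall (a : R[i]) (x1 x2 y : V),
          inner (a *: x1 + x2) y = a * inner x1 y + inner x2 y),
      (forall x y : V, inner y x = (inner x y)^*),
      (forall x : V, 0 <= inner x x) &
      (forall x : V, inner x x = 0 -> x = 0)].

Definition hnorm (x : V) : R := Num.sqrt (complex.Re (inner x x)).

Definition hcomplete : Prop :=
  forall u : nat -> V,
    (forall e : R, 0 < e -> exists N : nat, forall m n : nat,
        (N <= m)%N -> (N <= n)%N -> hnorm (u m - u n) < e) ->
    exists l : V, forall e : R, 0 < e -> exists N : nat, forall n : nat,
        (N <= n)%N -> hnorm (u n - l) < e.

Definition is_hilbert : Prop := is_inner_product /\ hcomplete.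

Definition bounded_op (T : V -> V) : Prop :=
  (forall (a : R[i]) (x y : V), T (a *: x + y) = a *: T x + T y) /\
  exists M : R, forall x : V, hnorm (T x) <= M * hnorm x.

Definition opnorm (T : V -> V) : R :=
  sup [set hnorm (T x) | x in [set x : V | hnorm x <= 1]].

Definition is_adjoint (T S : V -> V) : Prop :=
  forall x y : V, inner (T x) y = inner x (S y).

Definition normal_op (T Tstar : V -> V) : Prop :=
  forall x : V, T (Tstar x) = Tstar (T x).

Definition Omega (T Tstar : V -> V) : R :=
  sup [set r : R | exists zeta eta : R[i],
          `|zeta| ^+ 2 + `|eta| ^+ 2 <= 1 /\
          r = opnorm (fun x => zeta *: T x + eta *: Tstar x)].
End Hilbert.

(* Submission.v *)
Require Import Defs.
From HB Require Import structures.
From mathcomp Require Import all_boot all_order all_algebra.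
From mathcomp Require Import complex.
From mathcomp Require Import boolp classical_sets reals.
Set Implicit Arguments.
Unset Strict Implicit.
Unset Printing Implicit Defensive.
Import Order.TTheory GRing.Theory Num.Theory.
From mathcomp Require Import ring lra.
Local Open Scope ring_scope.
Local Open Scope complex_scope.
Local Open Scope ring_scope.

Section Basics.
Variables (R : realType) (V : lmodType R[i]) (ip : V -> V -> R[i]).
Hypothesis Hip : is_inner_product ip.

Lemma ReD (a b : R[i]) : complex.Re (a + b) = complex.Re a + complex.Re b.
Proof. by case: a => ? ?; case: b. Qed.
Lemma ReN (a : R[i]) : complex.Re (- a) = - complex.Re a.
Proof. by case: a. Qed.
Lemma ReB (a b : R[i]) : complex.Re (a - b) = complex.Re a - complex.Re b.
Proof. by rewrite ReD ReN. Qed.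
Lemma ReJ (a : R[i]) : complex.Re (Num.conj a) = complex.Re a.
Proof. by case: a. Qed.
Lemma ReM_real (t : R) (a : R[i]) : complex.Re (t%:C * a) = t * complex.Re a.
Proof. by case: a => x y /=; rewrite mul0r subr0. Qed.
Lemma Re_real (t : R) : complex.Re t%:C = t.
Proof. by []. Qed.
Lemma conj_real (t : R) : Num.conj (t%:C : R[i]) = t%:C.
Proof. exact: conjc_real. Qed.

Lemma ip0l y : ip 0 y = 0.
Proof.
case: Hip => lin _ _ _.
have := lin 1 0 0 y; rewrite scaler0 addr0 mul1r => h.
by apply: (addrI (ip 0 y)); rewrite addr0 -h.
Qed.
Lemma ipDl x y z : ip (x + y) z = ip x z + ip y z.
Proof. by case: Hip => lin _ _ _; have := lin 1 x y z; rewrite scale1r mul1r. Qed.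
Lemma ipZl a x z : ip (a *: x) z = a * ip x z.
Proof. by case: Hip => lin _ _ _; have := lin a x 0 z; rewrite addr0 ip0l addr0. Qed.
Lemma ipNl x z : ip (- x) z = - ip x z.
Proof. by rewrite -scaleN1r ipZl mulN1r. Qed.
Lemma ipBl x y z : ip (x - y) z = ip x z - ip y z.
Proof. by rewrite ipDl ipNl. Qed.
Lemma ipC x y : ip y x = Num.conj (ip x y).
Proof. by case: Hip. Qed.
Lemma ipDr x y z : ip z (x + y) = ip z x + ip z y.
Proof. by rewrite ipC ipDl rmorphD /= -!ipC. Qed.
Lemma ipZr a x z : ip z (a *: x) = Num.conj a * ip z x.
Proof. by rewrite ipC ipZl rmorphM /= -!ipC. Qed.
Lemma ipNr x z : ip z (- x) = - ip z x.
Proof. by rewrite ipC ipNl rmorphN /= -ipC. Qed.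
Lemma ipBr x y z : ip z (x - y) = ip z x - ip z y.
Proof. by rewrite ipDr ipNr. Qed.
Lemma ip0r y : ip y 0 = 0.
Proof. by rewrite ipC ip0l rmorph0. Qed.

Definition nsq x := complex.Re (ip x x).

Lemma ipxx x : ip x x = (nsq x)%:C.
Proof.
case: Hip => _ _ pos _; have := pos x; rewrite /nsq.
by case: (ip x x) => a b /andP [/eqP -> _].
Qed.
Lemma nsq_ge0 x : 0 <= nsq x.
Proof. by case: Hip => _ _ pos _; have := pos x; rewrite /nsq; case: (ip x x) => a b /andP [_]. Qed.
Lemma nsq_eq0 x : nsq x = 0 -> x = 0.
Proof. by case: Hip => _ _ _ def => h; apply: def; rewrite ipxx h. Qed.
Lemma nsq0 : nsq 0 = 0.
Proof. by rewrite /nsq ip0l. Qed.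

Lemma nsqD x y : nsq (x + y) = nsq x + nsq y + 2 * complex.Re (ip x y).
Proof.
rewrite /nsq ipDl !ipDr !ReD [ip y x]ipC ReJ; lra.
Qed.
Lemma nsqB x y : nsq (x - y) = nsq x + nsq y - 2 * complex.Re (ip x y).
Proof.
rewrite /nsq ipBl !ipBr !ReB [ip y x]ipC ReJ; lra.
Qed.
Lemma nsqZ a x : nsq (a *: x) = complex.Re (a * Num.conj a) * nsq x.
Proof. by rewrite /nsq ipZl ipZr mulrA ipxx mulrC ReM_real mulrC. Qed.
Lemma nsqZ_real (t : R) x : nsq (t%:C *: x) = t ^+ 2 * nsq x.
Proof. by rewrite nsqZ conj_real -rmorphM /= expr2. Qed.
Lemma nsqZ_unit a x : `|a| = 1 -> nsq (a *: x) = nsq x.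
Proof. by move=> h; rewrite nsqZ -normCK h expr1n mul1r. Qed.
Lemma nsqD_le x y : nsq (x + y) <= 2 * nsq x + 2 * nsq y.
Proof.
have := nsq_ge0 (x - y); rewrite nsqB nsqD; lra.
Qed.

Lemma re_cs x y : complex.Re (ip x y) ^+ 2 <= nsq x * nsq y.
Proof.
have [h0|hp] := eqVneq (nsq x) 0.
  by rewrite (nsq_eq0 h0) ip0l nsq0 mul0r /= expr2 mul0r.
have hx : 0 < nsq x by rewrite lt_def hp nsq_ge0.
set c := complex.Re (ip x y).
have := nsq_ge0 ((c / nsq x)%:C *: x - y).
rewrite nsqB nsqZ_real ipZl ReM_real -/c => h.
have e : (c / nsq x) ^+ 2 * nsq x = c ^+ 2 / nsq x.
  by rewrite !expr2; field.
rewrite e in h.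
have e2 : 2 * (c / nsq x * c) = 2 * (c ^+ 2 / nsq x) by rewrite mulrAC expr2.
rewrite e2 in h.
have h2 : c ^+ 2 / nsq x <= nsq y by lra.
by rewrite -ler_pdivrMl // mulrC.
Qed.

End Basics.

Section Ops.
Variables (R : realType) (V : lmodType R[i]) (ip : V -> V -> R[i]).
Hypothesis Hip : is_inner_product ip.
Local Notation nsq := (nsq ip).

Definition adj (S S' : V -> V) := forall x y, ip (S x) y = ip x (S' y).

Lemma ip_ext u w : (forall z, ip u z = ip w z) -> u = w.
Proof.
move=> h; apply/eqP; rewrite -subr_eq0; apply/eqP; apply: (nsq_eq0 Hip).
by rewrite /Submission.nsq (ipBl Hip) h subrr.
Qed.

Lemma adj_sym S S' : adj S S' -> adj S' S.
Proof. by move=> h x y; rewrite (ipC Hip) -h -(ipC Hip). Qed.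

Lemma adj_lin S S' : adj S S' -> forall a x y, S (a *: x + y) = a *: S x + S y.
Proof.
move=> h a x y; apply: ip_ext => z.
by rewrite h !(ipDl Hip) !(ipZl Hip) !h.
Qed.

Lemma linD S S' : adj S S' -> forall x y, S (x + y) = S x + S y.
Proof. by move=> h x y; rewrite -[x]scale1r (adj_lin h) !scale1r. Qed.
Lemma linZ S S' : adj S S' -> forall a x, S (a *: x) = a *: S x.
Proof.
move=> h a x; apply: ip_ext => z.
by rewrite h !(ipZl Hip) h.
Qed.
Lemma linN S S' : adj S S' -> forall x, S (- x) = - S x.
Proof. by move=> h x; rewrite -scaleN1r (linZ h) scaleN1r. Qed.
Lemma linB S S' : adj S S' -> forall x y, S (x - y) = S x - S y.
Proof. by move=> h x y; rewrite (linD h) (linN h). Qed.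

Lemma conj_half (z : R[i]) : Num.conj (z / 2) = Num.conj z / 2.
Proof. by rewrite rmorphM rmorphV ?unitfE ?pnatr_eq0 //= rmorph_nat. Qed.

Definition Cu (S S' : V -> V) (u : R[i]) (y : V) :=
  (u / 2) *: S y + (Num.conj u / 2) *: S' y.

Lemma Cu_adj S S' u : adj S S' -> adj (Cu S S' u) (Cu S S' u).
Proof.
move=> h x y; rewrite /Cu (ipDl Hip) !(ipZl Hip) (ipDr Hip) !(ipZr Hip).
rewrite h (adj_sym h) !conj_half conjCK addrC.
done.
Qed.

Definition Sq (S : V -> V) := fun x => S (S x).

Lemma adj_Sq S S' : adj S S' -> adj (Sq S) (Sq S').
Proof. by move=> h x y; rewrite /Sq !h. Qed.

Definition normal (S S' : V -> V) := forall x, S (S' x) = S' (S x).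

Lemma normal_Sq S S' : normal S S' -> normal (Sq S) (Sq S').
Proof. by move=> h x; rewrite /Sq (h (S' x)) (h x) (h (S' (S x))) (h (S x)). Qed.

End Ops.

Section Bounds.
Variables (R : realType) (V : lmodType R[i]) (ip : V -> V -> R[i]).
Hypothesis Hip : is_inner_product ip.
Local Notation nsq := (nsq ip).
Local Notation adj := (adj ip).

Lemma sa_bound X (L : R) : adj X X -> 0 <= L ->
  (forall y, `|complex.Re (ip (X y) y)| <= L * nsq y) ->
  forall y, nsq (X y) <= L ^+ 2 * nsq y.
Proof.
move=> hX L0 hq y.
have key : forall a b, 4 * complex.Re (ip (X a) b) <= 2 * L * (nsq a + nsq b).
  move=> a b.
  have ec : ip (X (a + b)) (a + b) - ip (X (a - b)) (a - b)
            = 2%:C * (ip (X a) b + Num.conj (ip (X a) b)).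
    rewrite (linD Hip hX) (linB Hip hX) !(ipDl Hip) !(ipNl Hip) !(ipDr Hip) !(ipNr Hip).
    rewrite [ip (X b) a]hX [ip b (X a)](ipC Hip).
    have -> : (2%:C : R[i]) = 2 by rewrite -[2]/(2%:R) rmorph_nat.
    ring.
  have e1 := congr1 (@complex.Re R) ec.
  rewrite ReB ReM_real ReD ReJ in e1.
  have h1 := hq (a + b); have h2 := hq (a - b).
  rewrite ler_norml in h1; rewrite ler_norml in h2.
  case/andP: h1 => _ h1; case/andP: h2 => h2 _.
  have p1 := nsqD Hip a b; have p2 := nsqB Hip a b.
  have -> : 2 * L * (nsq a + nsq b) = L * nsq (a + b) + L * nsq (a - b).
    by rewrite p1 p2; ring.
  lra.
set n := nsq (X y); set m := nsq y.
have n0 : 0 <= n := nsq_ge0 Hip _.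
have m0 : 0 <= m := nsq_ge0 Hip _.
have kt : forall t : R, 4 * (t * n) <= 2 * L * (m + t ^+ 2 * n).
  move=> t; have := key y (t%:C *: X y).
  by rewrite (ipZr Hip) conj_real ReM_real (nsqZ_real Hip).
have [L00|Lp] := eqVneq L 0.
  have := kt 1; rewrite L00; nra.
have Lpos : 0 < L by rewrite lt_def Lp L0.
have := kt L^-1.
have hL : L * L^-1 = 1 by rewrite mulfV.
move=> h.
have h' : L * (4 * (L^-1 * n)) <= L * (2 * L * (m + L^-1 ^+ 2 * n)).
  by rewrite ler_pM2l.
have e1 : L * (4 * (L^-1 * n)) = 4 * n.
  by field.
have e2 : L * (2 * L * (m + L^-1 ^+ 2 * n)) = 2 * L ^+ 2 * m + 2 * n.
  by rewrite mulrDr mulrDr expr2; field.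
rewrite e1 e2 in h'; lra.
Qed.

Definition Bd (S S' : V -> V) (L : R) := forall u : R[i], `|u| = 1 ->
  forall y, nsq (Cu S S' u y) <= L * nsq y.

Lemma Cu_sq S S' (v w : R[i]) y : adj S S' ->
  w * w = - (v * v) -> w * Num.conj w = v * Num.conj v ->
  Cu (Sq S) (Sq S') (v ^+ 2) y =
  Cu S S' v (Cu S S' v y) - Cu S S' w (Cu S S' w y).
Proof.
move=> h e1 e2.
have h' := adj_sym Hip h.
have e3 : Num.conj w * Num.conj w = - (Num.conj v * Num.conj v).
  by rewrite -!rmorphM e1 rmorphN.
apply: (ip_ext Hip) => z.
rewrite /Cu /Sq !(linD Hip h) !(linD Hip h') !(linZ Hip h) !(linZ Hip h').
rewrite !(ipBl Hip) !(ipDl Hip) !(ipZl Hip) rmorphXn /=.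
rewrite !(ipDl Hip) !(ipZl Hip).
have h2 : (2 : R[i]) * 2^-1 = 1 by rewrite mulfV // pnatr_eq0.
set cv := Num.conj v in e2 e3 *. set cw := Num.conj w in e2 e3 *. set i2 := (2 : R[i])^-1 in h2 *.
set A := ip (S (S y)) z; set B := ip (S (S' y)) z; set C := ip (S' (S y)) z.
set D := ip (S' (S' y)) z.
have z1 : w * w + v * v = 0 by rewrite e1 addNr.
have z2 : v * cv - w * cw = 0 by rewrite e2 subrr.
have z3 : cw * cw + cv * cv = 0 by rewrite e3 addNr.
have z4 : 1 - 2 * i2 = 0 by rewrite h2 subrr.
apply/eqP; rewrite -subr_eq0; apply/eqP.
transitivity (i2 * (1 - 2 * i2) * (v ^+ 2 * A + cv ^+ 2 * D) + i2 * i2 * ((w * w + v * v) * A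
  - (v * cv - w * cw) * (B + C) + (cw * cw + cv * cv) * D)); first by ring.
rewrite z1 z2 z3 z4; ring.
Qed.

End Bounds.

Section Bounds2.
Variables (R : realType) (V : lmodType R[i]) (ip : V -> V -> R[i]).
Hypothesis Hip : is_inner_product ip.
Local Notation nsq := (nsq ip).
Local Notation adj := (adj ip).
Local Notation Bd := (Bd ip).

Lemma unit_of (z : R[i]) : `|z| ^+ 2 = 1 -> `|z| = 1.
Proof. by move=> h; apply/eqP; rewrite -(@pexpr_eq1 _ _ 2) // h. Qed.

Lemma Bd_sq S S' L : adj S S' -> 0 <= L -> Bd S S' L -> Bd (Sq S) (Sq S') (L ^+ 2).
Proof.
move=> h L0 hb u hu y.
set v := sqrtc u.
have hv2 : v ^+ 2 = u by rewrite /v sqr_sqrtc.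
have hv : `|v| = 1 by apply: unit_of; rewrite -normrX hv2 hu.
set w := - 'i * v.
have e1 : w * w = - (v * v).
  have hi : 'i * 'i = -1 :> R[i] by rewrite -expr2 sqrCi.
  transitivity (('i * 'i) * (v * v)); first by rewrite /w; ring.
  by rewrite hi mulN1r.
have e2 : w * Num.conj w = v * Num.conj v.
  rewrite /w rmorphM rmorphN /= conjCi opprK.
  have hi : 'i * 'i = -1 :> R[i] by rewrite -expr2 sqrCi.
  transitivity (- ('i * 'i) * (v * Num.conj v)); first by ring.
  by rewrite hi opprK mul1r.
have hw : `|w| = 1.
  by apply: unit_of; rewrite normCK e2 -normCK hv expr1n.
have hA := Cu_adj Hip u (adj_Sq h).
rewrite -hv2 in hA *.
apply: (sa_bound Hip hA L0) => z.
rewrite (Cu_sq Hip z h e1 e2) (ipBl Hip).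
have hAv := Cu_adj Hip v h; have hBw := Cu_adj Hip w h.
rewrite hAv hBw ReB.
have a1 := hb v hv z; have a2 := hb w hw z.
have b1 := nsq_ge0 Hip (Cu S S' v z); have b2 := nsq_ge0 Hip (Cu S S' w z).
rewrite -/(Submission.nsq ip _) -/(Submission.nsq ip _).
rewrite ler_norml; apply/andP; split; lra.
Qed.

Lemma Bd_S S S' L : adj S S' -> Bd S S' L -> forall y, nsq (S y) <= 4 * L * nsq y.
Proof.
move=> h hb y.
have e : S y = Cu S S' 1 y + 'i *: Cu S S' (- 'i) y.
  apply: (ip_ext Hip) => z.
  rewrite /Cu !(ipDl Hip) !(ipZl Hip) !(ipDl Hip) !(ipZl Hip) rmorph1 rmorphN /= conjCi opprK.
  set a := ip (S y) z; set b := ip (S' y) z.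
  have hi : 1 + 'i * 'i = 0 :> R[i] by rewrite -expr2 sqrCi addrN.
  have h2 : 2 * 2^-1 - 1 = 0 :> R[i] by rewrite mulfV ?subrr // pnatr_eq0.
  apply/eqP; rewrite eq_sym -subr_eq0; apply/eqP.
  transitivity (- a * 2^-1 * (1 + 'i * 'i) + b * 2^-1 * (1 + 'i * 'i) + a * (2 * 2^-1 - 1)); first by ring.
  by rewrite hi h2; ring.
have n1 : `|(1 : R[i])| = 1 by rewrite normr1.
have n2 : `|(- 'i : R[i])| = 1 by rewrite normrN normCi.
have := nsqD_le Hip (Cu S S' 1 y) ('i *: Cu S S' (- 'i) y).
rewrite -e (nsqZ_unit Hip _ (normCi _)).
have := hb _ n1 y; have := hb _ n2 y.
lra.
Qed.

Lemma nsq_adj_normal S S' : adj S S' -> normal S S' -> forall z, nsq (S' z) = nsq (S z).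
Proof.
move=> h hn z.
rewrite /Submission.nsq (adj_sym Hip h) hn -h (ipC Hip) ReJ.
done.
Qed.

Lemma pw S S' : adj S S' -> normal S S' -> forall x,
  nsq (S x) ^+ 2 <= nsq (S (S x)) * nsq x.
Proof.
move=> h hn x.
have e : nsq (S x) = complex.Re (ip (S' (S x)) x).
  by rewrite /Submission.nsq (adj_sym Hip h).
rewrite e -(nsq_adj_normal h hn).
exact: re_cs.
Qed.

End Bounds2.

Lemma bernoulli (R : realType) (d : R) (n : nat) : 0 <= d -> 1 + n%:R * d <= (1 + d) ^+ n.
Proof.
move=> d0; elim: n => [|n IH]; first by rewrite mul0r addr0 expr0.
rewrite exprS -natr1.
have p : 0 <= n%:R * d by rewrite mulr_ge0.
nra.
Qed.

Lemma growth (R : realType) (a L : R) : 0 <= L -> 0 <= a ->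
  (forall k : nat, a ^+ (2 ^ k) <= 4 * L ^+ (2 ^ k)) -> a <= L.
Proof.
move=> L0 a0 h; rewrite leNgt; apply/negP => lt.
have [L00|Lp] := eqVneq L 0.
  by have := h 0%N; rewrite expn0 !expr1 L00; lra.
have Lpos : 0 < L by rewrite lt_def Lp L0.
set r := a / L.
have r1 : 1 < r by rewrite /r ltr_pdivlMr // mul1r.
set d := r - 1.
have d0 : 0 < d by rewrite /d subr_gt0.
have q0 : 0 <= 4 / d by rewrite divr_ge0 // ltW.
have hk := archi_boundP q0.
set k := Num.Def.archi_bound (4 / d) in hk.
have hk2 : (k%:R : R) <= (2 ^ k)%:R by rewrite ler_nat ltnW // ltn_expl.
have b := bernoulli (2 ^ k) (ltW d0).
have e : 1 + d = r by rewrite /d subrKC.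
rewrite e in b.
have hh := h k.
have eL : a = r * L by rewrite /r divfK.
rewrite eL exprMn in hh.
have Lk : 0 < L ^+ (2 ^ k) by rewrite exprn_gt0.
have rk : r ^+ (2 ^ k) <= 4 by rewrite -(ler_pM2r Lk).
have : 4 < (2 ^ k)%:R * d.
  have : 4 / d * d < (2 ^ k)%:R * d.
    by rewrite ltr_pM2r //; apply: (lt_le_trans hk hk2).
  by rewrite divfK // gt_eqF.
lra.
Qed.

Section Main.
Variables (R : realType) (V : lmodType R[i]) (ip : V -> V -> R[i]).
Hypothesis Hip : is_inner_product ip.
Local Notation nsq := (nsq ip).
Local Notation adj := (adj ip).
Local Notation Bd := (Bd ip).
Local Notation SQ := (@Sq R V).

Lemma chain T T' L : adj T T' -> normal T T' -> 0 <= L -> Bd T T' L ->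
  forall k, [/\ adj (iter k SQ T) (iter k SQ T'), normal (iter k SQ T) (iter k SQ T')
           & Bd (iter k SQ T) (iter k SQ T') (L ^+ (2 ^ k))].
Proof.
move=> h hn L0 hb; elim=> [|k [IH1 IH2 IH3]]; first by rewrite expn0 expr1.
rewrite !iterS; split; first exact: adj_Sq.
  exact: normal_Sq.
rewrite expnS mulnC exprM; apply: Bd_sq => //.
exact: exprn_ge0.
Qed.

Lemma key T T' L : adj T T' -> normal T T' -> 0 <= L -> Bd T T' L ->
  forall x, nsq x <= 1 -> nsq (T x) <= L.
Proof.
move=> h hn L0 hb x hx.
have x0 := nsq_ge0 Hip x.
have c : forall k, nsq (T x) ^+ (2 ^ k) <= nsq (iter k SQ T x).
  elim=> [|k IH]; first by rewrite expn0 expr1.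
  have [h1 h2 _] := chain h hn L0 hb k.
  rewrite iterS expnS mulnC exprM /Sq.
  have p0 : 0 <= nsq (T x) ^+ (2 ^ k) by rewrite exprn_ge0 // nsq_ge0.
  have q := pw Hip h1 h2 x.
  have q0 := nsq_ge0 Hip (iter k SQ T (iter k SQ T x)).
  have s0 := nsq_ge0 Hip (iter k SQ T x).
  set P := nsq (T x) ^+ (2 ^ k) in p0 IH *.
  set Q := nsq (iter k SQ T x) in IH q s0 *.
  set W := nsq (iter k SQ T (iter k SQ T x)) in q q0 *.
  nra.
apply: growth => //; first exact: nsq_ge0.
move=> k; apply: (le_trans (c k)).
have [h1 _ h3] := chain h hn L0 hb k.
have := Bd_S Hip h1 h3 x.
have p : 0 <= L ^+ (2 ^ k) by exact: exprn_ge0.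
nra.
Qed.

Lemma scaling F L : adj F F -> (forall y, nsq y <= 1 -> nsq (F y) <= L) ->
  forall y, nsq (F y) <= L * nsq y.
Proof.
move=> h hb y.
have [y0|yp] := eqVneq (nsq y) 0.
  have F0 : F 0 = 0.
    by have := linB Hip h 0 0; rewrite subrr => ->; rewrite subrr.
  by rewrite (nsq_eq0 Hip y0) F0 (nsq0 Hip) mulr0.
have ypos : 0 < nsq y by rewrite lt_def yp nsq_ge0.
set s := Num.sqrt (nsq y).
have spos : 0 < s by rewrite sqrtr_gt0.
have ss : s ^+ 2 = nsq y by rewrite sqr_sqrtr // ltW.
have := hb (((s^-1)%:C : R[i]) *: y).
rewrite (linZ Hip h) !(nsqZ_real Hip) exprVn ss mulVf // => /(_ (lexx _)).
have -> : (nsq y)^-1 * nsq (F y) = nsq (F y) / nsq y by rewrite mulrC.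
by rewrite ler_pdivrMr.
Qed.

End Main.

Lemma norm_realC (R : realType) (t : R) : 0 <= t -> `|(t%:C : R[i])| = t%:C.
Proof.
move=> t0; rewrite normc_def /=.
by rewrite expr0n /= addr0 sqrtr_sqr ger0_norm.
Qed.

Lemma two_C (R : realType) : (2%:C : R[i]) = 2.
Proof. by rewrite -[2]/(2%:R) rmorph_nat. Qed.

Local Open Scope classical_set_scope.

Unset Implicit Arguments.

Theorem corollary3p5 (R : realType) (V : lmodType R[i])
  (inner : V -> V -> R[i]) (T Tstar : V -> V) :
  is_hilbert inner ->
  bounded_op inner T ->
  is_adjoint inner T Tstar ->
  normal_op T Tstar ->
  Omega inner T Tstar = Num.sqrt 2 * opnorm inner T.
Proof.
move=> [Hip _] [Tlin [M hM]] hadj hn.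
have h : adj inner T Tstar := hadj.
have hn' : normal T Tstar := hn.
have hnE : forall x, hnorm inner x = Num.sqrt (nsq inner x) by [].
have hn0 : forall x, 0 <= hnorm inner x by move=> x; exact: sqrtr_ge0.
have hle1 : forall x, (hnorm inner x <= 1) <-> (nsq inner x <= 1).
  move=> x; split => hx.
    have e : nsq inner x = hnorm inner x ^+ 2 by rewrite hnE sqr_sqrtr // nsq_ge0.
    have := hn0 x; rewrite e; nra.
  by rewrite hnE -sqrtr1 ler_wsqrtr.
have hnorm_0 : hnorm inner 0 = 0 by rewrite hnE nsq0 // sqrtr0.
set N := opnorm inner T.
have ubT : forall x, hnorm inner x <= 1 -> hnorm inner (T x) <= N.
  move=> x hx; apply: ub_le_sup; last by exists x.
  exists `|M|; move=> r [z hz <-].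
  have := hM z; have := hn0 z; have := hn0 (T z).
  have : M <= `|M| := ler_norm M.
  have : 0 <= `|M| := normr_ge0 M.
  move: hz; rewrite /mkset => hz.
  nra.
have N0 : 0 <= N by apply: le_trans (ubT 0 _); rewrite ?hnorm_0 ?ler01.
have nT' : forall x, nsq inner (Tstar x) = nsq inner (T x) := nsq_adj_normal Hip h hn'.
set s := Num.sqrt (2 : R).
have s0 : 0 < s by rewrite sqrtr_gt0.
have ss : s ^+ 2 = 2 by rewrite sqr_sqrtr.
have sn0 : s != 0 by rewrite gt_eqF.
have shalf : s / 2 = s^-1 by rewrite -ss expr2; field.
have Fbound : forall zeta eta : R[i], `|zeta| ^+ 2 + `|eta| ^+ 2 <= 1 ->
    forall x, hnorm inner x <= 1 -> hnorm inner (zeta *: T x + eta *: Tstar x) <= s * N.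
  move=> zeta eta hze x hx.
  have hre : complex.Re (zeta * Num.conj zeta) + complex.Re (eta * Num.conj eta) <= 1.
    move: hze; rewrite !normCK lecE => /andP [_].
    by rewrite ReD.
  have r1 : 0 <= complex.Re (zeta * Num.conj zeta) by rewrite -normCK -add_Re2_Im2 /= addr_ge0 ?sqr_ge0.
  have r2 : 0 <= complex.Re (eta * Num.conj eta) by rewrite -normCK -add_Re2_Im2 /= addr_ge0 ?sqr_ge0.
  have e := nsqD_le Hip (zeta *: T x) (eta *: Tstar x).
  rewrite !(nsqZ Hip) nT' in e.
  have n0 := nsq_ge0 Hip (T x).
  have e2 : nsq inner (zeta *: T x + eta *: Tstar x) <= 2 * nsq inner (T x) by nra.
  rewrite hnE.
  apply: (le_trans (ler_wsqrtr e2)).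
  rewrite sqrtrM ?ler0n // -hnE ler_pM2l //.
  exact: ubT.
have opF : forall zeta eta : R[i], `|zeta| ^+ 2 + `|eta| ^+ 2 <= 1 ->
    opnorm inner (fun x => zeta *: T x + eta *: Tstar x) <= s * N.
  move=> zeta eta hze; apply: ge_sup.
    by exists (hnorm inner (zeta *: T 0 + eta *: Tstar 0)), 0 => //; rewrite /mkset hnorm_0 ler01.
  by move=> r [x hx <-]; apply: Fbound.
set E := [set r : R | exists zeta eta : R[i],
          `|zeta| ^+ 2 + `|eta| ^+ 2 <= 1 /\
          r = opnorm inner (fun x => zeta *: T x + eta *: Tstar x)].
have hubE : has_ubound E by exists (s * N) => r [zeta [eta [hze ->]]]; apply: opF.
have Ole : Omega inner T Tstar <= s * N.
  apply: ge_sup.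
    exists (opnorm inner (fun x => 0 *: T x + 0 *: Tstar x)), 0, 0; split => //.
    by rewrite normr0 expr0n addr0 ler01.
  by move=> r [zeta [eta [hze ->]]]; apply: opF.
set Om := Omega inner T Tstar.
have lower : forall u : R[i], `|u| = 1 -> forall y, nsq inner y <= 1 ->
    hnorm inner (s%:C *: Cu T Tstar u y) <= Om.
  move=> u hu y hy.
  set zeta := (s^-1)%:C * u; set eta := (s^-1)%:C * Num.conj u.
  have si0 : 0 <= s^-1 by rewrite invr_ge0 ltW.
  have hz : `|zeta| = (s^-1)%:C by rewrite /zeta normrM norm_realC // hu mulr1.
  have he : `|eta| = (s^-1)%:C.
    by rewrite /eta normrM norm_realC // normcJ hu mulr1.
  have hze : `|zeta| ^+ 2 + `|eta| ^+ 2 <= 1.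
    rewrite hz he -rmorphXn -rmorphD /=.
    have -> : s^-1 ^+ 2 + s^-1 ^+ 2 = 1.
      by rewrite exprVn ss; field.
    by rewrite lexx.
  have eF : s%:C *: Cu T Tstar u y = zeta *: T y + eta *: Tstar y.
    rewrite /Cu scalerDr !scalerA; congr (_ *: _ + _ *: _).
      rewrite /zeta mulrCA mulrC; congr (_ * _).
      have -> : (s%:C : R[i]) / 2 = (s / 2)%:C by rewrite rmorphM rmorphV ?unitfE ?pnatr_eq0 //= two_C.
      by rewrite shalf.
    rewrite /eta mulrCA mulrC; congr (_ * _).
    have -> : (s%:C : R[i]) / 2 = (s / 2)%:C by rewrite rmorphM rmorphV ?unitfE ?pnatr_eq0 //= two_C.
    by rewrite shalf.
  rewrite eF.
  have hy' : hnorm inner y <= 1 by apply/hle1.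
  apply: le_trans (_ : opnorm inner (fun x => zeta *: T x + eta *: Tstar x) <= Om).
    apply: ub_le_sup; last by exists y.
    by exists (s * N) => r [x hx <-]; apply: Fbound.
  by apply: ub_le_sup => //; exists zeta, eta.
have Om0 : 0 <= Om.
  apply: le_trans (lower 1 (normr1 _) 0 _); first exact: hn0.
  by rewrite nsq0 // ler01.
set L := Om ^+ 2 / 2.
have L0 : 0 <= L by rewrite divr_ge0 ?sqr_ge0.
have hBd : Bd inner T Tstar L.
  move=> u hu; apply: (scaling Hip (Cu_adj Hip u h)) => y hy.
  have := lower u hu y hy.
  rewrite hnE (nsqZ_real Hip) ss => hl.
  have n0 := nsq_ge0 Hip (Cu T Tstar u y).
  have q : 2 * nsq inner (Cu T Tstar u y) <= Om ^+ 2.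
    have := sqr_sqrtr (mulr_ge0 (ler0n _ 2) n0).
    have := sqrtr_ge0 (2 * nsq inner (Cu T Tstar u y)).
    move: hl; set q := Num.sqrt _ => hl q0 eq; rewrite -eq; nra.
  by rewrite /L ler_pdivlMr // mulrC.
have hkey := key Hip h hn' L0 hBd.
have NT : N <= Om / s.
  apply: ge_sup.
    by exists (hnorm inner (T 0)), 0 => //; rewrite /mkset hnorm_0 ler01.
  move=> r [x hx <-].
  have := hkey x ((hle1 x).1 hx).
  have e : nsq inner (T x) = hnorm inner (T x) ^+ 2 by rewrite hnE sqr_sqrtr // nsq_ge0.
  rewrite e => q.
  have c0 : 0 <= Om / s by rewrite divr_ge0 // ltW.
  have c2 : (Om / s) ^+ 2 = L by rewrite /L expr_div_n ss.
  have := hn0 (T x).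
  rewrite -c2 in q; nra.
apply: le_anti; rewrite Ole /=.
by rewrite -ler_pdivlMl // mulrC.
Qed.
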